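(* Let $M$ be a complete pointed metric space and $Y$ a real Banach space. If $Y_1$ is an absolute summand of $Y$ and $\mathrm{A}(M,Y)$ is dense in $\mathrm{Lip}_0(M,Y)$, then $\mathrm{A}(M,Y_1)$ is dense in $\mathrm{Lip}_0(M,Y_1)$.
   Context: Throughout, metric spaces are complete and pointed, with base point $0$. $\mathrm{Lip}_0(M,Y)$ is the Banach space of Lipschitz maps $f:M\to Y$ with $f(0)=0$, normed by $\|f\|=\sup_{p\neq q}\|f(p)-f(q)\|/d(p,q)$. A map $f$ attains its norm toward $y\in Y$ if there is a sequence $(p_n,q_n)$ in $M\times M$ with $p_n\neq q_n$ such that $[f(p_n)-f(q_n)]/d(p_n,q_n)\to y$ and $\|y\|=\|f\|$; $\mathrm{A}(M,Y)$ is the set of $f$ attaining their norm toward some vector. An absolute norm $|\cdot|_a$ on $\mathbb{R}^2$ is a norm with $|(1,0)|_a=|(0,1)|_a=1$ and $|(p,q)|_a=|(|p|,|q|)|_a$ for all $p,q$. The absolute sum $Y_1\oplus_a Y_2$ of Banach spaces $Y_1,Y_2$ is $Y_1\times Y_2$ with the norm $\|(y_1,y_2)\|_a=|(\|y_1\|,\|y_2\|)|_a$. A Banach space $Y_1$ is an absolute summand of $Y$ if $Y=Y_1\oplus_a Y_2$ (isometrically) for some Banach space $Y_2$ and some absolute norm $|\cdot|_a$. *)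

(* Defs.v *)
From HB Require Import structures.
From mathcomp Require Import all_boot all_order all_algebra.
From mathcomp Require Import all_classical all_reals all_analysis.
Set Implicit Arguments. Unset Strict Implicit. Unset Printing Implicit Defensive.
Import Order.TTheory GRing.Theory Num.Theory.
Import numFieldNormedType.Exports.
Local Open Scope classical_set_scope.
Local Open Scope ring_scope.

Section Defs.
Variable R : realType.

Definition is_metric (M : Type) (d : M -> M -> R) : Prop :=
  (forall x y, 0 <= d x y) /\
  (forall x y, d x y = 0 <-> x = y) /\
  (forall x y, d x y = d y x) /\
  (forall x y z, d x z <= d x y + d y z).

Definition complete_metric (M : Type) (d : M -> M -> R) : Prop :=
  is_metric d /\
  (forall u : nat -> M,
     (forall e : R, 0 < e -> exists N : nat, forall m n : nat,
        (N <= m)%N -> (N <= n)%N -> d (u m) (u n) < e) ->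
     exists x : M, forall e : R, 0 < e -> exists N : nat, forall n : nat,
        (N <= n)%N -> d (u n) x < e).

Definition Lip0 (M : Type) (d : M -> M -> R) (x0 : M)
  (Y : normedModType R) (f : M -> Y) : Prop :=
  f x0 = 0 /\ exists L : R, forall p q, `|f p - f q| <= L * d p q.

Definition lipnorm (M : Type) (d : M -> M -> R) (Y : normedModType R)
  (f : M -> Y) : R :=
  sup [set r : R | exists p q : M, p <> q /\ r = `|f p - f q| / d p q].

Definition attains_toward (M : Type) (d : M -> M -> R) (Y : normedModType R)
  (f : M -> Y) (y : Y) : Prop :=
  (exists pq : nat -> M * M,
     (forall n, (pq n).1 <> (pq n).2) /\
     (fun n => (d (pq n).1 (pq n).2)^-1 *: (f (pq n).1 - f (pq n).2))
        @ \oo --> y) /\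
  `|y| = lipnorm d f.

Definition normA (M : Type) (d : M -> M -> R) (x0 : M) (Y : normedModType R)
  (f : M -> Y) : Prop :=
  Lip0 d x0 f /\ exists y : Y, attains_toward d f y.

Definition A_dense (M : Type) (d : M -> M -> R) (x0 : M)
  (Y : normedModType R) : Prop :=
  forall f : M -> Y, Lip0 d x0 f ->
  forall e : R, 0 < e ->
  exists g : M -> Y, normA d x0 g /\ lipnorm d (f \- g) < e.

Definition absolute_norm (N : R -> R -> R) : Prop :=
  (forall p q, 0 <= N p q) /\
  (forall p q, N p q = 0 -> p = 0 /\ q = 0) /\
  (forall l p q, N (l * p) (l * q) = `|l| * N p q) /\
  (forall p q p' q', N (p + p') (q + q') <= N p q + N p' q') /\
  N 1 0 = 1 /\ N 0 1 = 1 /\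
  (forall p q, N p q = N `|p| `|q|).

(* Y1 is an absolute summand of Y: Y is isometrically isomorphic to
   Y1 (+)_a Y2 for some Banach space Y2 and absolute norm N; the linear
   isometric isomorphism is y |-> (P1 y, P2 y). *)
Definition absolute_summand (Y1 Y : completeNormedModType R) : Prop :=
  exists (Y2 : completeNormedModType R) (N : R -> R -> R)
         (P1 : Y -> Y1) (P2 : Y -> Y2),
    absolute_norm N /\
    (forall (a : R) (x y : Y), P1 (a *: x + y) = a *: P1 x + P1 y) /\
    (forall (a : R) (x y : Y), P2 (a *: x + y) = a *: P2 x + P2 y) /\
    bijective (fun y : Y => (P1 y, P2 y)) /\
    (forall y : Y, N `|P1 y| `|P2 y| = `|y|).

End Defs.

(* Main.v *)
Require Import Defs.
From HB Require Import structures.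
From mathcomp Require Import all_boot all_order all_algebra.
From mathcomp Require Import all_classical all_reals all_analysis.
From mathcomp Require Import ring lra.
Set Implicit Arguments. Unset Strict Implicit. Unset Printing Implicit Defensive.
Import Order.TTheory GRing.Theory Num.Theory.
Import numFieldNormedType.Exports.
Local Open Scope classical_set_scope.
Local Open Scope ring_scope.

Section AbsNorm.
Variable R : realType.
Variable N : R -> R -> R.
Hypothesis hN : absolute_norm N.

Lemma N_ge0 p q : 0 <= N p q. Proof. by case: hN. Qed.
Lemma N_hom l p q : N (l * p) (l * q) = `|l| * N p q.
Proof. by case: hN => _ [_ [H _]]. Qed.
Lemma N_tri p q p' q' : N (p + p') (q + q') <= N p q + N p' q'.
Proof. by case: hN => _ [_ [_ [H _]]]. Qed.
Lemma N10 : N 1 0 = 1. Proof. by case: hN => _ [_ [_ [_ [H _]]]]. Qed.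
Lemma N01 : N 0 1 = 1. Proof. by case: hN => _ [_ [_ [_ [_ [H _]]]]]. Qed.
Lemma N_abs p q : N p q = N `|p| `|q|.
Proof. by case: hN => _ [_ [_ [_ [_ [_ H]]]]]. Qed.

Lemma N_a0 a : N a 0 = `|a|.
Proof. by have := N_hom a 1 0; rewrite mulr1 mulr0 N10 mulr1. Qed.
Lemma N_0b b : N 0 b = `|b|.
Proof. by have := N_hom b 0 1; rewrite mulr1 mulr0 N01 mulr1. Qed.

Lemma N_negr p q : N p (- q) = N p q.
Proof. by rewrite N_abs normrN -N_abs. Qed.

Lemma N_negl p q : N (- p) q = N p q.
Proof. by rewrite N_abs normrN -N_abs. Qed.

Lemma N_conv p q x1 y1 x2 y2 : 0 <= p -> 0 <= q ->
  N (p * x1 + q * x2) (p * y1 + q * y2) <= p * N x1 y1 + q * N x2 y2.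
Proof.
move=> hp hq; apply: le_trans (N_tri _ _ _ _) _.
by rewrite !N_hom (ger0_norm hp) (ger0_norm hq).
Qed.

Lemma N_ge_l p q : `|p| <= N p q.
Proof.
have := N_tri p q p (- q); rewrite subrr N_negr N_a0.
have -> : p + p = 2 * p by ring.
rewrite normrM ger0_norm //; lra.
Qed.

Lemma N_ge_r p q : `|q| <= N p q.
Proof.
have := N_tri p q (- p) q; rewrite subrr N_negl N_0b.
have -> : q + q = 2 * q by ring.
rewrite normrM ger0_norm //; lra.
Qed.

Lemma N_le_sum a b : N a b <= `|a| + `|b|.
Proof. by have := N_tri a 0 0 b; rewrite addr0 add0r N_a0 N_0b. Qed.

Lemma N_mono2 a b b' : 0 <= b -> b <= b' -> N a b <= N a b'.
Proof.
move=> hb hbb'.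
have hb' : 0 < b' \/ b' = 0.
  by case: (ltrgt0P b') => [h|h|h]; [left|lra|right].
case: hb' => [hb'|hb']; last first.
  have -> : b = 0 by lra.
  by rewrite hb'.
have := @N_conv ((b' + b) / 2) ((b' - b) / 2) a b' a (- b').
rewrite N_negr.
have -> : (b' + b) / 2 * a + (b' - b) / 2 * a = b' * a by field.
have -> : (b' + b) / 2 * b' + (b' - b) / 2 * - b' = b' * b by field.
have -> : (b' + b) / 2 * N a b' + (b' - b) / 2 * N a b' = b' * N a b' by field.
rewrite N_hom ger0_norm; last lra.
move=> H; have : b' * N a b <= b' * N a b' by apply: H; lra.
by rewrite ler_pM2l.
Qed.

Lemma N_F1 s a b al : 0 <= a -> 0 <= b -> b < s -> N a b = s ->
  0 <= al -> N al b <= s -> al <= a.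
Proof.
move=> ha hb hbs hab hal hN1.
rewrite leNgt; apply/negP => hlt.
have halp : 0 < al by lra.
have := @N_conv (a / al) (1 - a / al) al b 0 b.
have t1 : 0 <= a / al by apply: divr_ge0; lra.
have t2 : a / al < 1 by rewrite ltr_pdivrMr // mul1r.
rewrite mulr0 addr0.
have -> : a / al * al = a by field; lra.
have -> : a / al * b + (1 - a / al) * b = b by ring.
rewrite N_0b ger0_norm // hab => H.
have := H t1 ltac:(lra).
have : a / al * N al b <= a / al * s by rewrite ler_wpM2l.
have : (1 - a / al) * b < (1 - a / al) * s by rewrite ltr_pM2l //; lra.
lra.
Qed.

Lemma N_support s a b : 0 <= a -> 0 <= b -> b < s -> N a b = s ->
  exists la, 0 <= la /\ forall al be, 0 <= al -> 0 <= be -> N al be <= s ->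
    al + la * be <= a + la * b.
Proof.
move=> ha hb hbs hab.
have F2 : forall al be, 0 <= al -> b <= be -> N al be <= s -> al <= a.
  move=> al be hal hbe H; apply: (N_F1 ha hb hbs hab hal).
  by apply: le_trans H; apply: N_mono2.
have key : forall a1 b1 a2 b2, 0 <= a1 -> 0 <= b1 -> 0 <= a2 ->
    b1 < b -> b < b2 -> N a1 b1 <= s -> N a2 b2 <= s ->
    (a1 - a) / (b - b1) <= (a - a2) / (b2 - b).
  move=> a1 b1 a2 b2 h1 h2 h3 hl hr H1 H2.
  set D1 := b - b1; set D2 := b2 - b.
  have hD1 : 0 < D1 by rewrite /D1; lra.
  have hD2 : 0 < D2 by rewrite /D2; lra.
  have := @N_conv D2 D1 a1 b1 a2 b2 ltac:(lra) ltac:(lra).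
  set X := (D2 * a1 + D1 * a2) / (D1 + D2).
  have -> : D2 * a1 + D1 * a2 = (D1 + D2) * X by rewrite /X; field; lra.
  have -> : D2 * b1 + D1 * b2 = (D1 + D2) * b by rewrite /D1 /D2; ring.
  rewrite N_hom ger0_norm; last lra.
  move=> H.
  have HX : N X b <= s.
    have : (D1 + D2) * N X b <= (D1 + D2) * s.
      apply: le_trans H _.
      have : D2 * N a1 b1 <= D2 * s by rewrite ler_wpM2l //; lra.
      have : D1 * N a2 b2 <= D1 * s by rewrite ler_wpM2l //; lra.
      lra.
    by rewrite ler_pM2l //; lra.
  have hX0 : 0 <= X by rewrite /X; apply: divr_ge0; nra.
  have := N_F1 ha hb hbs hab hX0 HX.
  rewrite /X ler_pdivrMr; last lra.
  move=> HH.
  rewrite ler_pdivrMr // mulrAC ler_pdivlMr //.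
  nra.
pose Lo := [set r : R | r = 0 \/ exists a1 b1, [/\ 0 <= a1, 0 <= b1, b1 < b,
   N a1 b1 <= s & r = (a1 - a) / (b - b1)]].
have ub : ubound Lo (a / (s - b)).
  move=> r [->|[a1 [b1 [h1 h2 h3 h4 ->]]]].
    by apply: divr_ge0; lra.
  have := key a1 b1 0 s h1 h2 (lexx 0) h3 hbs h4.
  by rewrite N_0b subr0 ger0_norm; [apply|lra].
have hs : has_sup Lo by split; [exists 0; left|exists (a / (s - b))].
exists (sup Lo); split.
  by apply: sup_upper_bound => //; left.
move=> al be hal hbe H.
case: (ltrgtP be b) => hbe'.
- have : (al - a) / (b - be) <= sup Lo.
    by apply: sup_upper_bound => //; right; exists al, be.
  rewrite ler_pdivrMr; last lra.
  nra.
- have : sup Lo <= (a - al) / (be - b).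
    apply: ge_sup; first by exists 0; left.
    move=> r [->|[a1 [b1 [h1 h2 h3 h4 ->]]]].
      apply: divr_ge0; last lra.
      have := F2 al be hal (ltW hbe') H; lra.
    exact: key.
  rewrite ler_pdivlMr; last lra.
  nra.
- have hle : b <= be by rewrite hbe'.
  have := F2 al be hal hle H; rewrite hbe'; lra.
Qed.

End AbsNorm.
Section Rho.
Variable R : realType.
Variable V : normedModType R.
Variable y : V.

Definition qq (z : V) (t : R) : R := (`|y + t *: z| - `|y|) / t.
Definition rho (z : V) : R := - sup [set r : R | exists t, 0 < t /\ r = - qq z t].

Lemma qq_ge z t : 0 < t -> - `|z| <= qq z t.
Proof.
move=> ht; rewrite /qq ler_pdivlMr //.
have h : `|y| <= `|y + t *: z| + t * `|z|.
  have := ler_normB (y + t *: z) (t *: z).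
  by rewrite addrK normrZ ger0_norm //; exact: ltW.
lra.
Qed.

Lemma rho_set_sup z : has_sup [set r : R | exists t, 0 < t /\ r = - qq z t].
Proof.
split; first by exists (- qq z 1), 1; split.
exists `|z| => r [t [ht ->]]; have := qq_ge z ht; lra.
Qed.

Lemma rho_le z t : 0 < t -> rho z <= qq z t.
Proof.
move=> ht; rewrite /rho lerNl.
by apply: sup_upper_bound; [exact: rho_set_sup | exists t].
Qed.

Lemma rho_approx z e : 0 < e -> exists2 t, 0 < t & qq z t < rho z + e.
Proof.
move=> he; have [r [t [ht ->]] H] := sup_adherent he (rho_set_sup z).
exists t => //; rewrite /rho; lra.
Qed.

Lemma rho_ge z m : (forall t, 0 < t -> m <= qq z t) -> m <= rho z.
Proof.
move=> H; rewrite leNgt; apply/negP => hlt.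
have he : 0 < m - rho z by rewrite subr_gt0.
have [t ht Ht] := rho_approx z he.
have := H t ht; lra.
Qed.

Lemma qq_lip z z' t : 0 < t -> qq z t <= qq z' t + `|z - z'|.
Proof.
move=> ht; rewrite /qq.
have h : `|y + t *: z| <= `|y + t *: z'| + t * `|z - z'|.
  have -> : y + t *: z = (y + t *: z') + t *: (z - z').
    by rewrite scalerBr -addrA; congr (y + _); rewrite addrC subrK.
  by apply: le_trans (ler_normD _ _) _; rewrite normrZ ger0_norm //; exact: ltW.
have : (`|y + t *: z| - `|y|) / t <= (`|y + t *: z'| + t * `|z - z'| - `|y|) / t.
  by rewrite ler_pM2r ?invr_gt0 //; lra.
have -> : (`|y + t *: z'| + t * `|z - z'| - `|y|) / t =
   (`|y + t *: z'| - `|y|) / t + `|z - z'| by field; lra.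
done.
Qed.

Lemma qq_mono z s t : 0 < s -> s <= t -> qq z s <= qq z t.
Proof.
move=> hs hst; rewrite /qq.
have ht : 0 < t by lra.
have h : `|y + s *: z| <= (1 - s / t) * `|y| + (s / t) * `|y + t *: z|.
  have -> : y + s *: z = (1 - s / t) *: y + (s / t) *: (y + t *: z).
    rewrite scalerDr scalerA.
    have -> : s / t * t = s by field; lra.
    by rewrite addrA -scalerDl subrK scale1r.
  have h1 : 0 <= 1 - s / t by rewrite subr_ge0 ler_pdivrMr // mul1r.
  have h2 : 0 <= s / t by apply: divr_ge0; lra.
  apply: le_trans (ler_normD _ _) _.
  have hti : 0 < t^-1 by rewrite invr_gt0.
  by rewrite !normrZ (ger0_norm h1) (gtr0_norm hs) (gtr0_norm hti).
rewrite ler_pdivlMr // mulrAC ler_pdivrMr //.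
have : t * `|y + s *: z| <= t * ((1 - s / t) * `|y| + (s / t) * `|y + t *: z|).
  by rewrite ler_pM2l.
have -> : t * ((1 - s / t) * `|y| + (s / t) * `|y + t *: z|) =
   (t - s) * `|y| + s * `|y + t *: z| by field; lra.
lra.
Qed.

Lemma qq_sub z w t : 0 < t -> qq (z + w) t <= qq z (2 * t) + qq w (2 * t).
Proof.
move=> ht; rewrite /qq.
have h : `|y + t *: (z + w)| <= (`|y + (2 * t) *: z| + `|y + (2 * t) *: w|) / 2.
  have -> : y + t *: (z + w) = 2^-1 *: (y + (2 * t) *: z) + 2^-1 *: (y + (2 * t) *: w).
    have -> : 2^-1 *: (y + (2 * t) *: z) = 2^-1 *: y + t *: z.
      by rewrite scalerDr scalerA mulrA mulVf ?mul1r.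
    have -> : 2^-1 *: (y + (2 * t) *: w) = 2^-1 *: y + t *: w.
      by rewrite scalerDr scalerA mulrA mulVf ?mul1r.
    rewrite addrACA -scalerDl scalerDr.
    have -> : (2^-1 + 2^-1 : R) = 1 by field.
    by rewrite scale1r.
  apply: le_trans (ler_normD _ _) _.
  rewrite !normrZ gtr0_norm ?invr_gt0 //; lra.
have t2 : 0 < 2 * t by lra.
rewrite ler_pdivrMr //.
have -> : ((`|y + (2 * t) *: z| - `|y|) / (2 * t) +
  (`|y + (2 * t) *: w| - `|y|) / (2 * t)) * t =
  (`|y + (2 * t) *: z| + `|y + (2 * t) *: w|) / 2 - `|y| by field; lra.
lra.
Qed.

Lemma qq_hom z k t : 0 < k -> 0 < t -> qq (k *: z) t = k * qq z (k * t).
Proof.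
move=> hk ht; rewrite /qq scalerA [t * k]mulrC; field; lra.
Qed.

Lemma rho_lip z z' : rho z <= rho z' + `|z - z'|.
Proof.
apply/ler_addgt0Pr => e he.
have [t ht H] := rho_approx z' he.
have := rho_le z ht; have := qq_lip z z' ht; lra.
Qed.

Lemma rho_lip2 z z' : `|rho z - rho z'| <= `|z - z'|.
Proof.
have := rho_lip z z'; have := rho_lip z' z; rewrite distrC.
rewrite ler_norml; lra.
Qed.

Lemma rho_sub z w : rho (z + w) <= rho z + rho w.
Proof.
apply/ler_addgt0Pr => e he.
have he2 : 0 < e / 2 by rewrite divr_gt0.
have [t1 ht1 H1] := rho_approx z he2.
have [t2 ht2 H2] := rho_approx w he2.
set m := Num.min t1 t2.
have hm : 0 < m by rewrite /m lt_min ht1 ht2.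
have hm1 : m <= t1 by rewrite /m ge_min lexx.
have hm2 : m <= t2 by rewrite /m ge_min lexx orbT.
have ht : 0 < m / 2 by rewrite divr_gt0.
have := rho_le (z + w) ht.
have := qq_sub z w ht.
have -> : 2 * (m / 2) = m by field.
have := qq_mono z hm hm1; have := qq_mono w hm hm2.
lra.
Qed.

Lemma rho_homle z k : 0 < k -> rho (k *: z) <= k * rho z.
Proof.
move=> hk; apply/ler_addgt0Pr => e he.
have hek : 0 < e / k by rewrite divr_gt0.
have [t ht H] := rho_approx z hek.
have htk : 0 < t / k by rewrite divr_gt0.
have := rho_le (k *: z) htk.
rewrite qq_hom //.
have -> : k * (t / k) = t by field; lra.
have : k * qq z t <= k * (rho z + e / k) by rewrite ler_pM2l //; exact: ltW.
have -> : k * (rho z + e / k) = k * rho z + e by field; lra.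
lra.
Qed.

Lemma rho_hom z k : 0 < k -> rho (k *: z) = k * rho z.
Proof.
move=> hk; apply/le_anti/andP; split; first exact: rho_homle.
have hki : 0 < k^-1 by rewrite invr_gt0.
have := rho_homle (k *: z) hki.
rewrite scalerA mulVf ?gt_eqF // scale1r.
move=> H; have : k * rho z <= k * (k^-1 * rho (k *: z)) by rewrite ler_pM2l.
by rewrite mulrA mulfV ?gt_eqF // mul1r.
Qed.

Lemma qq_y t : 0 < t -> qq y t = `|y|.
Proof.
move=> ht; rewrite /qq.
have -> : y + t *: y = (1 + t) *: y by rewrite scalerDl scale1r.
rewrite normrZ ger0_norm; last lra.
field; lra.
Qed.

Lemma rho_y : rho y = `|y|.
Proof.
apply/le_anti/andP; split; first by rewrite -(qq_y ltr01); exact: rho_le.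
by apply: rho_ge => t ht; rewrite qq_y.
Qed.

Lemma rho_ny : rho (- y) = - `|y|.
Proof.
apply/le_anti/andP; split.
  have := rho_le (- y) ltr01; rewrite /qq scale1r subrr normr0 divr1; lra.
by apply: rho_ge => t ht; have := qq_ge (- y) ht; rewrite normrN.
Qed.

Lemma rho_quot Z Z' (D : R) B : 0 < D -> Z - Z' = D *: B ->
  `|(rho Z - rho Z') / D - `|y| | <= `|B - y|.
Proof.
move=> hD hZ.
have h1 : rho Z <= rho Z' + D * rho B.
  have -> : Z = Z' + D *: B by rewrite -hZ addrC subrK.
  by rewrite -rho_hom //; exact: rho_sub.
have h2 : rho Z' <= rho Z + D * rho (- B).
  have -> : Z' = Z + D *: (- B) by rewrite scalerN -hZ opprB addrC subrK.
  by rewrite -rho_hom //; exact: rho_sub.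
have h3 : rho B <= `|y| + `|B - y| by rewrite -rho_y; exact: rho_lip.
have h4 : rho (- B) <= - `|y| + `|B - y|.
  have -> : `|B - y| = `|- B - - y| by rewrite -opprD normrN.
  by rewrite -rho_ny; exact: rho_lip.
have h3' : D * rho B <= D * (`|y| + `|B - y|) by rewrite ler_pM2l.
have h4' : D * rho (- B) <= D * (- `|y| + `|B - y|) by rewrite ler_pM2l.
set Q := (rho Z - rho Z') / D.
have hQ : rho Z - rho Z' = Q * D by rewrite /Q; field; lra.
have L1 : D * (`|y| - `|B - y|) <= D * Q by nra.
have L2 : D * Q <= D * (`|y| + `|B - y|) by nra.
rewrite ler_pM2l // in L1; rewrite ler_pM2l // in L2.
rewrite ler_norml; apply/andP; split; lra.
Qed.

End Rho.
Section Z. Variable V : zmodType.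
Lemma sub4 (a b c d : V) : (a - b) - (c - d) = (a - c) - (b - d).
Proof. by rewrite !opprB addrACA [RHS]addrACA [- c - b]addrC. Qed.
Lemma subKr' (a b : V) : a - (a - b) = b.
Proof. by rewrite opprB addrC subrK. Qed.
Lemma subtr (a b c : V) : (a - b) + (b - c) = a - c.
Proof. by rewrite addrA subrK. Qed.
End Z.
Section Lip.
Variable R : realType.
Variable M : Type.
Variable d : M -> M -> R.
Hypothesis hd : is_metric d.

Lemma d_ge0 p q : 0 <= d p q. Proof. by case: hd. Qed.
Lemma d_eq0 p q : d p q = 0 <-> p = q. Proof. by case: hd => _ []. Qed.
Lemma d_sym p q : d p q = d q p. Proof. by case: hd => _ [_ []]. Qed.
Lemma d_tri p q r : d p r <= d p q + d q r. Proof. by case: hd => _ [_ [_]]. Qed.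
Lemma d_pp p : d p p = 0. Proof. by apply/d_eq0. Qed.
Lemma d_gt0 p q : p <> q -> 0 < d p q.
Proof.
move=> hpq; rewrite lt_neqAle d_ge0 andbT; apply/eqP => h.
by apply: hpq; apply/d_eq0.
Qed.
Lemma d_lip p q r : `|d p r - d q r| <= d p q.
Proof.
have := d_tri p q r; have := d_tri q p r; rewrite (d_sym q p).
rewrite ler_norml => *; apply/andP; split; lra.
Qed.

Variable Y : normedModType R.

Definition lipschitz (u : M -> Y) := exists L : R, forall p q, `|u p - u q| <= L * d p q.

Lemma lip_quot (u : M -> Y) p q : lipschitz u -> p <> q ->
  `|u p - u q| / d p q <= lipnorm d u.
Proof.
move=> [L hL] hpq; apply: sup_upper_bound; last by exists p, q.
split; first by exists (`|u p - u q| / d p q), p, q.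
exists L => r [p' [q' [h' ->]]].
by rewrite ler_pdivrMr ?d_gt0.
Qed.

Lemma lip_le (u : M -> Y) p q : lipschitz u -> `|u p - u q| <= lipnorm d u * d p q.
Proof.
move=> hu; case: (pselect (p = q)) => [->|hpq].
  by rewrite subrr normr0 d_pp mulr0.
by rewrite -ler_pdivrMr ?d_gt0 //; exact: lip_quot.
Qed.

Lemma lipnorm_le (u : M -> Y) C : 0 <= C ->
  (forall p q, p <> q -> `|u p - u q| <= C * d p q) -> lipnorm d u <= C.
Proof.
move=> hC H.
case: (pselect (exists p q : M, p <> q)) => [[p [q hpq]]|hno].
  apply: ge_sup; first by exists (`|u p - u q| / d p q), p, q.
  by move=> r [p' [q' [h' ->]]]; rewrite ler_pdivrMr ?d_gt0 //; apply: H.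
rewrite /lipnorm.
have -> : [set r : R | exists p q : M, p <> q /\ r = `|u p - u q| / d p q] = set0.
  apply/seteqP; split => // r [p [q [hpq _]]]; apply: hno; by exists p, q.
by rewrite sup0.
Qed.

End Lip.
Section LinP.
Variable R : realType.
Variables Y Z : normedModType R.
Variable P : Y -> Z.
Hypothesis hP : forall (a : R) (x y : Y), P (a *: x + y) = a *: P x + P y.

Lemma P0 : P 0 = 0.
Proof. by have := hP (-1) 0 0; rewrite scaler0 addr0 scaleN1r addNr. Qed.
Lemma PD x y : P (x + y) = P x + P y.
Proof. by have := hP 1 x y; rewrite !scale1r. Qed.
Lemma PZ a x : P (a *: x) = a *: P x.
Proof. by have := hP a x 0; rewrite !addr0 P0 addr0. Qed.
Lemma PN x : P (- x) = - P x.
Proof. by rewrite -scaleN1r PZ scaleN1r. Qed.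
Lemma PB x y : P (x - y) = P x - P y.
Proof. by rewrite PD PN. Qed.
End LinP.

Theorem proposition3p4 (R : realType) (M : Type) (d : M -> M -> R) (x0 : M)
  (Y Y1 : completeNormedModType R) :
  complete_metric d ->
  absolute_summand Y1 Y ->
  A_dense d x0 Y ->
  A_dense d x0 Y1.
Proof.
move=> [hd _] [Y2 [N [P1 [P2 [hN [lin1 [lin2 [bij hnorm]]]]]]]] hA.
rewrite /A_dense => f hf e he.
have nP1 : forall z, `|P1 z| <= `|z|.
  by move=> z; rewrite -hnorm; have := N_ge_l hN `|P1 z| `|P2 z|; rewrite normr_id.
have nP2 : forall z, `|P2 z| <= `|z|.
  by move=> z; rewrite -hnorm; have := N_ge_r hN `|P1 z| `|P2 z|; rewrite normr_id.
case: bij => hinv hK hK'.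
pose J (v : Y1) : Y := hinv (v, 0).
have P1J : forall v, P1 (J v) = v by move=> v; exact: (congr1 fst (hK' (v, 0))).
have P2J : forall v, P2 (J v) = 0 by move=> v; exact: (congr1 snd (hK' (v, 0))).
have nJ : forall v v', `|J v - J v'| = `|v - v'|.
  move=> v v'; rewrite -hnorm (PB lin1) (PB lin2) !P1J !P2J subrr normr0.
  by rewrite (N_a0 hN) normr_id.
have J0 : J 0 = 0.
  have h : (P1 0, P2 0) = ((0 : Y1), (0 : Y2)) by rewrite (P0 lin1) (P0 lin2).
  by rewrite /J -h hK.
have hL0 : Lip0 d x0 (fun _ : M => (0 : Y)).
  by split => //; exists 0 => p q; rewrite subrr normr0 mul0r.
have h01 : (0:R) < 1 by [].
pose proof (hA (fun _ => 0) hL0 1 h01) as HH. destruct HH as [G0 [HG0 HG1]].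
case: HG0 => HG2 [y0 HG3]. case: HG3 => [[pq0 [hpq0 HG4]] HG5].
have [p1 hp1] : exists p1, p1 <> x0.
  case: (pselect ((pq0 0%N).1 = x0)) => h; last by exists (pq0 0%N).1.
  by exists (pq0 0%N).2 => h2; apply: (hpq0 0%N); rewrite h h2.
case: (pselect (exists v : Y1, v <> 0)) => [[v hv]|triv]; last first.
  have z : forall v : Y1, v = 0.
    by move=> v; case: (pselect (v = 0)) => // hv; exfalso; apply: triv; exists v.
  have l0 : lipschitz d (fun _ : M => (0 : Y1)).
    by exists 0 => p q; rewrite subrr normr0 mul0r.
  exists (fun _ => 0); split.
    split; first by split => //.
    exists 0; split.
      exists pq0; split => //.
      have -> : (fun n => (d (pq0 n).1 (pq0 n).2)^-1 *: ((0:Y1) - 0)) = fun _ => 0.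
        by apply: funext => n; rewrite subrr scaler0.
      exact: cvg_cst.
    rewrite normr0; apply/esym/le_anti/andP; split.
      by apply: (lipnorm_le hd (lexx 0)) => p q _; rewrite subrr normr0 mul0r.
    have := lip_quot hd l0 (hpq0 0%N).
    by rewrite subrr normr0 mul0r.
  apply: le_lt_trans he; apply: (lipnorm_le hd (lexx 0)) => p q _.
  by rewrite (z (_ - _)) normr0 mul0r.
have hv0 : 0 < `|v| by rewrite normr_gt0; apply/eqP.
pose u0 := `|v|^-1 *: v.
have nu0 : `|u0| = 1.
  by rewrite normrZ gtr0_norm ?invr_gt0 // mulVf ?gt_eqF.
case: hf => hf0 [Lf hLf].
have hD1 : 0 < d p1 x0 by apply: d_gt0.
have [t [ht0 hte hbig]] : exists t : R, [/\ 0 <= t, t <= e / 2 &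
   e / 4 * d p1 x0 <= `|f p1 - f x0 + (t * d p1 x0) *: u0|].
  case: (pselect (e / 4 * d p1 x0 <= `|f p1 - f x0|)) => h.
    by exists 0; split => //; [lra | rewrite mul0r scale0r addr0].
  have h' : `|f p1 - f x0| < e / 4 * d p1 x0 by rewrite ltNge; apply/negP.
  exists (e / 2); split; [lra | lra | ].
  set Qf := f p1 - f x0; set X := (e / 2 * d p1 x0) *: u0.
  have := ler_normB (Qf + X) Qf.
  rewrite addrAC subrr add0r /X normrZ nu0 mulr1 ger0_norm; last first.
    by apply: mulr_ge0; [lra | exact: ltW].
  have : 0 <= e / 4 * d p1 x0 by apply: mulr_ge0; [lra | exact: ltW].
  have -> : e / 2 * d p1 x0 = 2 * (e / 4 * d p1 x0) by field.
  lra.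
pose fp := fun p => f p + (t * d p x0) *: u0.
have hfp0 : fp x0 = 0 by rewrite /fp hf0 d_pp // mulr0 scale0r addr0.
have fp_diff : forall p q, fp p - fp q = (f p - f q) + (t * (d p x0 - d q x0)) *: u0.
  by move=> p q; rewrite /fp opprD addrACA -scalerBl mulrBr.
have hfp_lip : forall p q, `|fp p - fp q| <= (Lf + t) * d p q.
  move=> p q; rewrite fp_diff; apply: le_trans (ler_normD _ _) _.
  rewrite normrZ nu0 mulr1 normrM (ger0_norm ht0) mulrDl lerD //.
  by rewrite ler_wpM2l //; exact: d_lip.
have diff_ffp : forall p q, `|(f p - fp p) - (f q - fp q)| <= t * d p q.
  move=> p q; rewrite sub4 fp_diff opprD addrA subrr add0r normrN.
  rewrite normrZ nu0 mulr1 normrM (ger0_norm ht0).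
  by rewrite ler_wpM2l //; exact: d_lip.
pose F := fun p => J (fp p).
have hF : Lip0 d x0 F.
  split; first by rewrite /F hfp0 J0.
  by exists (Lf + t) => p q; rewrite /F nJ; exact: hfp_lip.
have he16 : 0 < e / 16 by lra.
pose proof (hA F hF (e / 16) he16) as HH.
destruct HH as [G [[[hG0 [LG hLG]] [y [[pq [hpq hcv]] hy]]] hFG]].
have hGl : lipschitz d G by exists LG.
have hFGl : lipschitz d (F \- G).
  exists (Lf + t + LG) => p q /=; rewrite sub4 mulrDl.
  apply: le_trans (ler_normB _ _) _; apply: lerD => //.
  by rewrite /F nJ; exact: hfp_lip.
set dl := lipnorm d (F \- G) in hFG.
have hdl : forall p q, `|(F p - G p) - (F q - G q)| <= dl * d p q.
  by move=> p q; exact: (lip_le hd p q hFGl).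
have hdl0 : 0 <= dl.
  by apply: le_trans (lip_quot hd hFGl hp1); apply: divr_ge0; [exact: normr_ge0 | exact: ltW].
have E1 : forall p q, `|P2 (G p) - P2 (G q)| <= dl * d p q.
  move=> p q; rewrite -(PB lin2).
  have -> : G p - G q = (F p - F q) - ((F p - G p) - (F q - G q)).
    by rewrite sub4 !subKr'.
  rewrite (PB lin2) (PB lin2 (F p)) /F !P2J subrr add0r normrN.
  by apply: le_trans (nP2 _) _; exact: hdl.
have E2 : forall p q, `|(fp p - fp q) - (P1 (G p) - P1 (G q))| <= dl * d p q.
  move=> p q.
  have -> : fp p - fp q = P1 (F p) - P1 (F q) by rewrite /F !P1J.
  rewrite -!(PB lin1) sub4.
  by apply: le_trans (nP1 _) _; exact: hdl.
pose Q := fun n => (d (pq n).1 (pq n).2)^-1 *: (G (pq n).1 - G (pq n).2).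
have hdn : forall n, 0 < d (pq n).1 (pq n).2 by move=> n; apply: d_gt0.
have hQ2 : forall n, `|P2 (Q n)| <= dl.
  move=> n; rewrite /Q (PZ lin2) (PB lin2) normrZ gtr0_norm ?invr_gt0 //.
  by rewrite mulrC ler_pdivrMr //; exact: E1.
set s := lipnorm d G in hy.
set a := `|P1 y|.
set b := `|P2 y|.
have hab : N a b = s by rewrite /a /b hnorm hy.
have E3 : b <= dl.
  apply/ler_addgt0Pr => eta heta.
  have [N0 _ HN0] := cvgr_dist_lt _ _ hcv _ heta.
  have := HN0 N0 (leqnn N0).
  have := hQ2 N0.
  have : b <= `|P2 (Q N0)| + `|y - Q N0|.
    rewrite /b; have -> : P2 y = P2 (Q N0) + P2 (y - Q N0) by rewrite -(PD lin2) addrC subrK.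
    by apply: le_trans (ler_normD _ _) _; rewrite lerD2l.
  lra.
have E4 : e / 4 - dl <= s.
  have h1 := lip_quot hd hGl hp1.
  have h2 : `|F p1 - F x0| <= `|G p1 - G x0| + `|(F p1 - G p1) - (F x0 - G x0)|.
    have -> : F p1 - F x0 = (G p1 - G x0) + ((F p1 - G p1) - (F x0 - G x0)).
      by rewrite sub4 [RHS]addrC subrK.
    exact: ler_normD.
  have h3 : `|F p1 - F x0| = `|f p1 - f x0 + (t * d p1 x0) *: u0|.
    by rewrite /F nJ fp_diff d_pp // subr0.
  have h4 := hdl p1 x0.
  rewrite ler_pdivrMr // in h1.
  have : (e / 4 - dl) * d p1 x0 <= s * d p1 x0 by rewrite -/s in h1; rewrite mulrBl; lra.
  by rewrite ler_pM2r.
have hs : 3 * e / 16 <= s by lra.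
have ha0 : 0 <= a by exact: normr_ge0.
have hb0 : 0 <= b by exact: normr_ge0.
have hbs : b < s by lra.
have hsum : s <= a + b.
  by rewrite -hab; have := N_le_sum hN a b; rewrite /a /b !normr_id.
have hapos : 0 < a by lra.
have [la [hla hsup]] := N_support hN ha0 hb0 hbs hab.
have has : a <= s by rewrite -hab; have := N_ge_l hN a b; rewrite /a normr_id.
have hla2 : la <= 2.
  have := hsup 0 s (lexx 0) ltac:(lra).
  rewrite (N_0b hN) ger0_norm; last lra.
  move=> /(_ (lexx _)) H; nra.
pose u := a^-1 *: P1 y.
have nu : `|u| = 1.
  by rewrite /u normrZ gtr0_norm ?invr_gt0 // mulVf ?gt_eqF.
pose rh := rho (P2 y).
pose g := fun p => P1 (G p) + (la * (rh (P2 (G p)) - rh (P2 (G x0)))) *: u.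
have g_diff : forall p q, g p - g q =
    (P1 (G p) - P1 (G q)) + (la * (rh (P2 (G p)) - rh (P2 (G q)))) *: u.
  move=> p q; rewrite /g opprD addrACA -scalerBl; congr (_ + _); congr (_ *: _).
  ring.
have hgx0 : g x0 = 0 by rewrite /g hG0 (P0 lin1) subrr mulr0 scale0r addr0.
have hrh : forall p q, `|rh (P2 (G p)) - rh (P2 (G q))| <= dl * d p q.
  by move=> p q; apply: le_trans (rho_lip2 _ _ _) (E1 p q).
have G1 : forall p q, p <> q -> `|g p - g q| <= (a + la * b) * d p q.
  move=> p q hpq'.
  have hDq : 0 < d p q by apply: d_gt0.
  have n1 : `|g p - g q| <= `|P1 (G p - G q)| + la * `|P2 (G p - G q)|.
    rewrite g_diff; apply: le_trans (ler_normD _ _) _.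
    rewrite (PB lin1) lerD2l normrZ nu mulr1 normrM (ger0_norm hla) (PB lin2).
    by rewrite ler_wpM2l //; exact: rho_lip2.
  set al := `|P1 (G p - G q)| / d p q.
  set be := `|P2 (G p - G q)| / d p q.
  have hNab : N al be <= s.
    rewrite /al /be mulrC [X in N _ X]mulrC (N_hom hN) hnorm.
    rewrite gtr0_norm ?invr_gt0 // mulrC.
    exact: (lip_quot hd hGl hpq').
  have := hsup al be ltac:(apply: divr_ge0; [exact: normr_ge0 | exact: ltW])
     ltac:(apply: divr_ge0; [exact: normr_ge0 | exact: ltW]) hNab.
  have -> : al + la * be = (`|P1 (G p - G q)| + la * `|P2 (G p - G q)|) / d p q.
    by rewrite /al /be; field; lra.
  rewrite ler_pdivrMr // => H; lra.
have hC0 : 0 <= a + la * b by nra.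
have G_lip : lipschitz d g.
  exists (a + la * b) => p q; case: (pselect (p = q)) => [->|hpq'].
    by rewrite subrr normr0 d_pp // mulr0.
  exact: G1.
have hg_le : lipnorm d g <= a + la * b by apply: lipnorm_le.
pose W := fun n => (d (pq n).1 (pq n).2)^-1 *: (g (pq n).1 - g (pq n).2).
pose w := P1 y + (la * b) *: u.
have hW : forall n, `|w - W n| <= (1 + la) * `|y - Q n|.
  move=> n.
  pose c := (rh (P2 (G (pq n).1)) - rh (P2 (G (pq n).2))) / d (pq n).1 (pq n).2.
  have hWn : W n = P1 (Q n) + (la * c) *: u.
    rewrite /W /Q g_diff scalerDr (PZ lin1) (PB lin1) scalerA; congr (_ + _ *: _).
    by rewrite /c; field; apply: lt0r_neq0.
  have hc : `|c - `|P2 y| | <= `|y - Q n|.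
    apply: le_trans (rho_quot (P2 y) (B := P2 (Q n)) (hdn n) _) _.
      by rewrite /Q (PZ lin2) scalerA mulfV ?gt_eqF // scale1r (PB lin2).
    by rewrite -(PB lin2) distrC; exact: nP2.
  rewrite hWn /w opprD addrACA -scalerBl -(PB lin1).
  apply: le_trans (ler_normD _ _) _.
  rewrite normrZ nu mulr1 mulrDl mul1r lerD //.
  rewrite -mulrBr normrM (ger0_norm hla) ler_wpM2l // distrC.
  exact: hc.
have hcvW : W @ \oo --> w.
  apply/cvgrPdist_lt => eta heta.
  have heta' : 0 < eta / (1 + la) by apply: divr_gt0; lra.
  apply: (filterS _ (cvgr_dist_lt _ _ hcv _ heta')) => n hn.
  apply: le_lt_trans (hW n) _.
  rewrite mulrC -ltr_pdivlMr; last lra.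
  exact: hn.
have hw : `|w| = a + la * b.
  have -> : w = (1 + la * b / a) *: P1 y.
    by rewrite /w /u scalerA scalerDl scale1r.
  rewrite normrZ ger0_norm; last first.
    have : 0 <= la * b / a by apply: divr_ge0 => //; exact: mulr_ge0.
    lra.
  rewrite -/a; field; lra.
have hg_ge : a + la * b <= lipnorm d g.
  apply/ler_addgt0Pr => eta heta.
  have [N0 _ HN0] := cvgr_dist_lt _ _ hcvW _ heta.
  have := HN0 N0 (leqnn N0).
  have h1 : `|W N0| <= lipnorm d g.
    rewrite /W normrZ gtr0_norm ?invr_gt0 // mulrC.
    exact: (lip_quot hd G_lip (hpq N0)).
  have h2 : `|w| <= `|W N0| + `|w - W N0|.
    have {1}-> : w = W N0 + (w - W N0) by rewrite addrC subrK.
    exact: ler_normD.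
  rewrite hw in h2; lra.
exists g; split.
  split; first by split; [exact: hgx0 | exact: G_lip].
  exists w; split; first by exists pq; split.
  by rewrite hw; apply/le_anti/andP; split.
apply: (le_lt_trans (lipnorm_le hd (C := t + dl + la * dl) _ _)).
  by nra.
  move=> p q _ /=.
  have -> : f p - g p - (f q - g q) = ((f p - fp p) - (f q - fp q)) +
     ((fp p - fp q) - (P1 (G p) - P1 (G q))) -
     (la * (rh (P2 (G p)) - rh (P2 (G q)))) *: u.
    rewrite [LHS]sub4 g_diff opprD addrA [in RHS]sub4 subtr //.
  apply: le_trans (ler_normB _ _) _.
  rewrite !mulrDl; apply: lerD.
    apply: le_trans (ler_normD _ _) _; apply: lerD; [exact: diff_ffp | exact: E2].
  rewrite normrZ nu mulr1 normrM (ger0_norm hla) -mulrA ler_wpM2l //.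

nra.
Qed.
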